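(* Let $\mathsf{N}_\mathsf{F}:=\mathsf{L}_\mathsf{F}\mathsf{K}_\mathsf{F}$ be a system of $N=L+K$ local fermionic modes, with the Jordan–Wigner isomorphism $J$ defined by an ordering in which the $L$ modes of $\mathsf{L}_\mathsf{F}$ come first. Let $\mathcal{C}$ be a fermionic transformation from $\mathsf{N}_\mathsf{F}$ to $\mathsf{N}_\mathsf{F}$ with a single Kraus operator $C$ such that $J(C)=U\otimes I_{\mathsf{K}_\mathsf{F}}$, where $U$ acts on the first $L$ qubits and $I_{\mathsf{K}_\mathsf{F}}$ is the identity on the last $K$ qubits. Then $\mathcal{C}$ is local on the first $L$ modes, i.e. $C$ is a linear combination of products of field operators of the modes of $\mathsf{L}_\mathsf{F}$ only.
   Context: A system of $N$ local fermionic modes is described by field operators $\varphi_1,\dots,\varphi_N$ with $\{\varphi_i,\varphi_j^\dagger\}=\delta_{ij}I$, $\{\varphi_i,\varphi_j\}=0$. Given an ordering of the modes, the Jordan–Wigner isomorphism identifies the Fock basis $(\varphi_1^\dagger)^{n_1}\cdots(\varphi_N^\dagger)^{n_N}|\Omega\rangle$ with the computational basis of $N$ qubits, with $J(\varphi_i)=(\bigotimes_{l<i}\sigma^z_l)\otimes\sigma^-_i\otimes(\bigotimes_{k>i}I_k)$, extended linearly and multiplicatively with $J(X^\dagger)=J(X)^\dagger$. Fermionic transformations are completely positive maps whose Kraus operators each are linear combinations of products of field operators with either all an even or all an odd number of factors. *)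

(* Defs.v *)
(* Jordan-Wigner representation of N fermionic modes on
   N qubits, with complex-like scalars (any numClosedFieldType, e.g. C). *)
From HB Require Import structures.
From mathcomp Require Import all_boot all_order all_algebra.
From mathcomp Require Import mxtens.
Set Implicit Arguments. Unset Strict Implicit. Unset Printing Implicit Defensive.
Import Order.TTheory GRing.Theory Num.Theory.
Local Open Scope ring_scope.

Section JW.
Variable Cf : numClosedFieldType.

(* sigma^z = diag(1,-1) and sigma^- = |0><1| (annihilation: |1> -> |0>),
   computational basis |0> = empty, |1> = occupied. *)
Definition sigz : 'M[Cf]_2 := \matrix_(i, j) (if i == j then (-1) ^+ i else 0).
Definition sigm : 'M[Cf]_2 :=
  \matrix_(i, j) (if (val i == 0%N) && (val j == 1%N) then 1 else 0).

Fixpoint kpow (A : 'M[Cf]_2) (n : nat) : 'M[Cf]_(2 ^ n) :=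
  match n return 'M[Cf]_(2 ^ n) with
  | 0 => 1%:M
  | n'.+1 => castmx (esym (expnS 2 n'), esym (expnS 2 n')) (A *t kpow A n')
  end.

Lemma jw_dim (N : nat) (i : 'I_N) : (2 ^ i * 2 * 2 ^ (N - i.+1) = 2 ^ N)%N.
Proof. by rewrite -expnSr -expnD subnKC // ltn_ord. Qed.

(* J(phi_i) = (sigma^z)^{(x) i} (x) sigma^- (x) I^{(x) (N-i-1)}
   (modes 0-indexed; mode 0 is the first / most significant tensor factor) *)
Definition jw_phi (N : nat) (i : 'I_N) : 'M[Cf]_(2 ^ N) :=
  castmx (jw_dim i, jw_dim i)
    ((kpow sigz i *t sigm) *t (1%:M : 'M[Cf]_(2 ^ (N - i.+1)))).

Definition adjmx (n : nat) (A : 'M[Cf]_n) : 'M[Cf]_n := map_mx (fun x => x^*) A^T.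

Definition jw_field (N : nat) (x : 'I_N * bool) : 'M[Cf]_(2 ^ N) :=
  if x.2 then adjmx (jw_phi x.1) else jw_phi x.1.

Definition jw_word (N : nat) (w : seq ('I_N * bool)) : 'M[Cf]_(2 ^ N) :=
  foldr (fun x M => jw_field x *m M) 1%:M w.

Definition lin_comb_of (N : nat) (P : seq ('I_N * bool) -> bool)
    (A : 'M[Cf]_(2 ^ N)) : Prop :=
  exists s : seq (Cf * seq ('I_N * bool)),
    all (fun p => P p.2) s /\ A = \sum_(p <- s) p.1 *: jw_word p.2.

(* Kraus operator of a fermionic transformation: linear combination of products
   of field operators all with an even, or all with an odd number of factors *)
Definition fermionic_kraus (N : nat) (A : 'M[Cf]_(2 ^ N)) : Prop :=
  lin_comb_of (fun w => ~~ odd (size w)) A \/ lin_comb_of (fun w => odd (size w)) A.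

Definition word_on_first (N L : nat) (w : seq ('I_N * bool)) : bool :=
  all (fun x => (val x.1 < L)%N) w.

Definition tens_id (L K : nat) (U : 'M[Cf]_(2 ^ L)) : 'M[Cf]_(2 ^ (L + K)) :=
  castmx (esym (expnD 2 L K), esym (expnD 2 L K)) (U *t (1%:M : 'M[Cf]_(2 ^ K))).

End JW.

(* Main.v *)
Require Import Defs.
From HB Require Import structures.
From mathcomp Require Import all_boot all_order all_algebra.
From mathcomp Require Import mxtens.
From mathcomp Require Import zify ring.
Import GRing.Theory Num.Theory.
Local Open Scope ring_scope.
Set Implicit Arguments. Unset Strict Implicit.

Section Cast.
Variable R : comPzRingType.

Lemma castmx_irr m n m' n' (e e' : (m = m') * (n = n')) (A : 'M[R]_(m, n)) :
  castmx e A = castmx e' A.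
Proof.
case: e e' => e1 e2 [e1' e2'].
by rewrite (eq_irrelevance e1 e1') (eq_irrelevance e2 e2').
Qed.

Lemma castmx_dep (f g : nat -> nat) (F : forall k, 'M[R]_(f k, g k)) k k'
  (ek : k = k') m n (e : (f k = m) * (g k = n)) (e' : (f k' = m) * (g k' = n)) :
  castmx e (F k) = castmx e' (F k').
Proof. by case: k' / ek e' => e'; apply: castmx_irr. Qed.

Lemma castmx_dep2 (f g : nat -> nat) (F : forall k, 'M[R]_(f k, g k)) k k'
  (ek : k = k') m n (e : (f k = m) * (g k = n)) :
  castmx e (F k) = castmx (etrans (congr1 f (esym ek)) e.1, etrans (congr1 g (esym ek)) e.2) (F k').
Proof. exact: castmx_dep. Qed.

Lemma castmx_cc m n m1 n1 m2 n2 (e1 : (m = m1) * (n = n1)) (e2 : (m1 = m2) * (n1 = n2))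
   (e3 : (m = m2) * (n = n2)) (A : 'M[R]_(m, n)) :
  castmx e2 (castmx e1 A) = castmx e3 A.
Proof. case: e1 e2 => a b [c d]; rewrite castmx_comp; apply: castmx_irr. Qed.

Lemma castmx_sym m n m1 n1 (e : (m = m1) * (n = n1)) (e' : (m1 = m) * (n1 = n))
   (A : 'M[R]_(m, n)) B : castmx e A = B -> A = castmx e' B.
Proof. move=> <-; rewrite (castmx_cc _ _ (erefl, erefl)) castmx_id //. Qed.

Lemma tens_castl m n m' n' p q (e : (m = m') * (n = n'))
  (A : 'M[R]_(m, n)) (B : 'M[R]_(p, q)) :
  castmx e A *t B = castmx (congr1 (muln^~ p) e.1, congr1 (muln^~ q) e.2) (A *t B).
Proof.
case: e => a b; case: m' / a; case: n' / b.
by rewrite !castmx_id.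
Qed.

Lemma tens_castr m n p q p' q' (e : (p = p') * (q = q'))
  (A : 'M[R]_(m, n)) (B : 'M[R]_(p, q)) :
  A *t castmx e B = castmx (congr1 (muln m) e.1, congr1 (muln n) e.2) (A *t B).
Proof.
case: e => a b; case: p' / a; case: q' / b.
by rewrite !castmx_id.
Qed.

Lemma tensmxA m n p q r s (A : 'M[R]_(m, n)) (B : 'M[R]_(p, q)) (C : 'M[R]_(r, s)) :
  (A *t B) *t C = castmx (mulnA _ _ _, mulnA _ _ _) (A *t (B *t C)).
Proof.
apply/matrixP => i j.
case: (mxtens_indexP i) => ij k; case: (mxtens_indexP ij) => i1 j1.
case: (mxtens_indexP j) => ij' k'; case: (mxtens_indexP ij') => i1' j1'.
rewrite castmxE !tensmxE.
have E1 : cast_ord (esym (mulnA m p r)) (mxtens_index (mxtens_index (i1, j1), k))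
   = mxtens_index (i1, mxtens_index (j1, k)).
  by apply: val_inj => /=; rewrite mulnDl -mulnA addnA.
have E2 : cast_ord (esym (mulnA n q s)) (mxtens_index (mxtens_index (i1', j1'), k'))
   = mxtens_index (i1', mxtens_index (j1', k')).
  by apply: val_inj => /=; rewrite mulnDl -mulnA addnA.
by rewrite E1 E2 !tensmxE mulrA.
Qed.

Lemma tens11 m n : (1%:M : 'M[R]_m) *t (1%:M : 'M[R]_n) = 1%:M.
Proof.
apply/matrixP => i j.
case: (mxtens_indexP i) => i1 i2; case: (mxtens_indexP j) => j1 j2.
rewrite tensmxE !mxE.
have -> : (mxtens_index (i1, i2) == mxtens_index (j1, j2)) = (i1 == j1) && (i2 == j2).
  apply/eqP/andP => [/(congr1 (@mxtens_unindex m n))|[/eqP-> /eqP->]] //.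
  by rewrite !mxtens_indexK => -[-> ->].
by case: (i1 == j1); case: (i2 == j2); rewrite /= ?mulr1 ?mulr0 ?mul0r.
Qed.

Lemma castmx_mulmx m n (e : (m = n) * (m = n)) (A B : 'M[R]_m) :
  castmx e (A *m B) = castmx e A *m castmx e B.
Proof. case: e => a b; case: n / a b => b; by rewrite !(castmx_irr (erefl, b) (erefl, erefl)) !castmx_id. Qed.

Lemma castmx1 m n (e : (m = n) * (m = n)) : castmx e (1%:M : 'M[R]_m) = 1%:M.
Proof. case: e => a b; case: n / a b => b; by rewrite (castmx_irr (erefl, b) (erefl, erefl)) !castmx_id. Qed.

Lemma castmxD m n m' n' (e : (m = m') * (n = n')) (A B : 'M[R]_(m, n)) :
  castmx e (A + B) = castmx e A + castmx e B.
Proof. case: e => a b; case: m' / a; case: n' / b; by rewrite !castmx_id. Qed.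

Lemma castmxZ m n m' n' (e : (m = m') * (n = n')) c (A : 'M[R]_(m, n)) :
  castmx e (c *: A) = c *: castmx e A.
Proof. case: e => a b; case: m' / a; case: n' / b; by rewrite !castmx_id. Qed.

Lemma castmx0 m n m' n' (e : (m = m') * (n = n')) :
  castmx e (0 : 'M[R]_(m, n)) = 0.
Proof. case: e => a b; case: m' / a; case: n' / b; by rewrite !castmx_id. Qed.

Lemma tensmxDr m n p q (A : 'M[R]_(m, n)) (B C : 'M[R]_(p, q)) :
  A *t (B + C) = A *t B + A *t C.
Proof. by apply/matrixP => i j; rewrite !mxE mulrDr. Qed.

Lemma tensmxZr m n p q (A : 'M[R]_(m, n)) c (B : 'M[R]_(p, q)) :
  A *t (c *: B) = c *: (A *t B).
Proof. by apply/matrixP => i j; rewrite !mxE mulrCA. Qed.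

Lemma tensmxDl m n p q (A B : 'M[R]_(m, n)) (C : 'M[R]_(p, q)) :
  (A + B) *t C = A *t C + B *t C.
Proof. by apply/matrixP => i j; rewrite !mxE mulrDl. Qed.

Lemma tensmxZl m n p q (A : 'M[R]_(m, n)) c (B : 'M[R]_(p, q)) :
  (c *: A) *t B = c *: (A *t B).
Proof. by apply/matrixP => i j; rewrite !mxE mulrA. Qed.

End Cast.

Section JWlem.
Variable Cf : numClosedFieldType.

Lemma adjmx_cast m n (e : (m = n) * (m = n)) (A : 'M[Cf]_m) :
  adjmx (castmx e A) = castmx e (adjmx A).
Proof. case: e => a b; case: n / a b => b; by rewrite !(castmx_irr (erefl, b) (erefl, erefl)) !castmx_id. Qed.

Lemma adjmx_tens m n (A : 'M[Cf]_m) (B : 'M[Cf]_n) :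
  adjmx (A *t B) = adjmx A *t adjmx B.
Proof. by apply/matrixP => i j; rewrite !mxE rmorphM. Qed.

Lemma adjmx1 m : adjmx (1%:M : 'M[Cf]_m) = 1%:M.
Proof. by apply/matrixP => i j; rewrite !mxE eq_sym; case: (_ == _); rewrite ?rmorph0 ?rmorph1. Qed.

Lemma jw_phi_widen L K (i : 'I_L) :
  jw_phi Cf (widen_ord (leq_addr K L) i) = tens_id K (jw_phi Cf i).
Proof.
rewrite /tens_id /jw_phi tens_castl castmx_comp [X in _ = castmx _ X]tensmxA castmx_comp tens11.

apply: (@castmx_dep _ (fun k => 2 ^ i * 2 * k)%N (fun k => 2 ^ i * 2 * k)%N
   (fun k => (kpow (sigz Cf) i *t sigm Cf) *t (1%:M : 'M_k))).
rewrite -expnD; congr (2 ^ _)%N; have := ltn_ord i; simpl; lia.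
Qed.

Lemma kpowS (A : 'M[Cf]_2) n :
  kpow A n.+1 = castmx (esym (expnS 2 n), esym (expnS 2 n)) (A *t kpow A n).
Proof. by []. Qed.

Lemma jw_phi0 N :
  jw_phi Cf (ord0 : 'I_N.+1) =
  castmx (esym (expnS 2 N), esym (expnS 2 N)) (sigm Cf *t (1%:M : 'M_(2 ^ N))).
Proof.
rewrite /jw_phi /= tens_scalar_mx scale1r tens_castl castmx_comp.
apply: (@castmx_dep _ (fun k => 2 * 2 ^ k)%N (fun k => 2 * 2 ^ k)%N
   (fun k => sigm Cf *t (1%:M : 'M_(2 ^ k)))).
by rewrite subSS subn0.
Qed.

Lemma jw_phiS N (j : 'I_N) :
  jw_phi Cf (lift ord0 j) =
  castmx (esym (expnS 2 N), esym (expnS 2 N)) (sigz Cf *t jw_phi Cf j).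
Proof.
rewrite /jw_phi.
rewrite (@castmx_dep2 _ (fun k => 2 ^ k * 2 * 2 ^ (N.+1 - k.+1))%N (fun k => 2 ^ k * 2 * 2 ^ (N.+1 - k.+1))%N
   (fun k => (kpow (sigz Cf) k *t sigm Cf) *t (1%:M : 'M_(2 ^ (N.+1 - k.+1)))) _ j.+1) //.
rewrite kpowS.
rewrite ?(tensmxA, tens_castl, tens_castr, castmx_comp).
apply: (@castmx_dep _ (fun k => 2 * (2 ^ j * (2 * 2 ^ k)))%N (fun k => 2 * (2 ^ j * (2 * 2 ^ k)))%N
   (fun k => sigz Cf *t (kpow (sigz Cf) j *t (sigm Cf *t (1%:M : 'M_(2 ^ k)))))).
by rewrite subSS.
Qed.

End JWlem.


Section Span.
Variable Cf : numClosedFieldType.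

Lemma jw_word_cat N (w1 w2 : seq ('I_N * bool)) :
  jw_word Cf (w1 ++ w2) = jw_word Cf w1 *m jw_word Cf w2.
Proof. by elim: w1 => [|x w IH] /=; [rewrite mul1mx | rewrite IH mulmxA]. Qed.

Variable N : nat.
Variable P : seq ('I_N * bool) -> bool.

Lemma span0 : lin_comb_of P (0 : 'M[Cf]_(2 ^ N)).
Proof. by exists [::]; rewrite big_nil. Qed.

Lemma spanD (A B : 'M[Cf]_(2 ^ N)) :
  lin_comb_of P A -> lin_comb_of P B -> lin_comb_of P (A + B).
Proof.
move=> [s [Hs ->]] [t [Ht ->]]; exists (s ++ t).
by rewrite all_cat Hs Ht big_cat.
Qed.

Lemma spanZ c (A : 'M[Cf]_(2 ^ N)) : lin_comb_of P A -> lin_comb_of P (c *: A).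
Proof.
move=> [s [Hs ->]]; exists [seq (c * p.1, p.2) | p <- s]; split.
  by rewrite all_map.
rewrite big_map scaler_sumr; apply: eq_bigr => p _; by rewrite scalerA.
Qed.

Lemma span_word w : P w -> lin_comb_of P (jw_word Cf w).
Proof. by move=> Pw; exists [:: (1, w)]; rewrite /= Pw big_seq1 scale1r. Qed.

Lemma span_sum (I : eqType) (r : seq I) (F : I -> 'M[Cf]_(2 ^ N)) :
  (forall i, i \in r -> lin_comb_of P (F i)) -> lin_comb_of P (\sum_(i <- r) F i).
Proof.
elim: r => [|x r IH] H; first by rewrite big_nil; exact: span0.
rewrite big_cons; apply: spanD; first by apply: H; rewrite mem_head.
by apply: IH => i Hi; apply: H; rewrite in_cons Hi orbT.
Qed.

Hypothesis Pcat : forall w1 w2, P w1 -> P w2 -> P (w1 ++ w2).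

Lemma span_mul (A B : 'M[Cf]_(2 ^ N)) :
  lin_comb_of P A -> lin_comb_of P B -> lin_comb_of P (A *m B).
Proof.
move=> [s [Hs ->]] [t [Ht ->]].
rewrite mulmx_suml; apply: span_sum => p ps.
rewrite mulmx_sumr; apply: span_sum => q qt.
rewrite -scalemxAl -scalemxAr scalerA -jw_word_cat.
apply/spanZ/span_word/Pcat; [exact: (allP Hs p ps) | exact: (allP Ht q qt)].
Qed.

End Span.


Section Two.
Variable Cf : numClosedFieldType.

Lemma mx2P (A B : 'M[Cf]_2) :
  (forall i j : 'I_2, A i j = B i j) -> A = B.
Proof. by move=> H; apply/matrixP. Qed.

Ltac two := apply/matrixP => [[[|[|?]] ?]] [[|[|?]] ?] //;
  rewrite !mxE ?big_ord_recl ?big_ord0 /= ?mxE ?big_ord_recl ?big_ord0 /= ?mxE /= ?rmorph0 ?rmorph1 ?rmorphN1 ?expr0 ?expr1;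
  rewrite ?(mulr0, mul0r, mulr1, mul1r, addr0, add0r, mulrN1, mulN1r, opprK) //; try ring.

Definition sg (b : bool) : 'M[Cf]_2 := if b then adjmx (sigm Cf) else sigm Cf.

Lemma adjmx_sigz : adjmx (sigz Cf) = sigz Cf.
Proof. two. Qed.

Lemma sigz2 : sigz Cf *m sigz Cf = 1%:M.
Proof. two. Qed.

Lemma sigz_dec : sigz Cf = 1%:M + (-2) *: (sg true *m sg false).
Proof. two. Qed.

Lemma delta_sg (a b : 'I_2) : exists w : seq bool,
  delta_mx a b = foldr (fun x M => sg x *m M) 1%:M w.
Proof.
case: a => [[|[|a]] Ha] //; case: b => [[|[|b]] Hb] //.
- by exists [:: false; true]; rewrite /= mulmx1 /sg; two.
- by exists [:: false]; rewrite /= mulmx1 /sg; two.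
- by exists [:: true]; rewrite /= mulmx1 /sg; two.
- by exists [:: true; false]; rewrite /= mulmx1 /sg; two.
Qed.

End Two.


Section Main.
Variable Cf : numClosedFieldType.

Lemma castmx_sum m n m' n' (e : (m = m') * (n = n')) (I : Type) (r : seq I) (F : I -> 'M[Cf]_(m, n)) :
  castmx e (\sum_(i <- r) F i) = \sum_(i <- r) castmx e (F i).
Proof. by elim: r => [|x r IH]; rewrite ?big_nil ?castmx0 // !big_cons castmxD IH. Qed.

Lemma tensr_sum m n p q (A : 'M[Cf]_(m, n)) (I : Type) (r : seq I) (F : I -> 'M[Cf]_(p, q)) :
  A *t (\sum_(i <- r) F i) = \sum_(i <- r) A *t F i.
Proof. by elim: r => [|x r IH]; rewrite ?big_nil ?tensmx0 // !big_cons tensmxDr IH. Qed.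

Lemma tensl_sum m n p q (A : 'M[Cf]_(p, q)) (I : Type) (r : seq I) (F : I -> 'M[Cf]_(m, n)) :
  (\sum_(i <- r) F i) *t A = \sum_(i <- r) F i *t A.
Proof. by elim: r => [|x r IH]; rewrite ?big_nil ?tens0mx // !big_cons tensmxDl IH. Qed.

Definition predT' N := fun _ : seq ('I_N * bool) => true.

Lemma span_field N (x : 'I_N * bool) : lin_comb_of (@predT' N) (jw_field Cf x).
Proof. by have := @span_word Cf N (@predT' N) [:: x] erefl; rewrite /= mulmx1. Qed.

Lemma span_mulT N (A B : 'M[Cf]_(2 ^ N)) :
  lin_comb_of (@predT' N) A -> lin_comb_of (@predT' N) B -> lin_comb_of (@predT' N) (A *m B).
Proof. exact: span_mul. Qed.

Lemma span1 N : lin_comb_of (@predT' N) (1%:M : 'M[Cf]_(2 ^ N)).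
Proof. exact: (@span_word Cf N (@predT' N) [::] erefl). Qed.

Section Step.
Variable L : nat.
Let E := (esym (expnS 2 L), esym (expnS 2 L)).

Lemma field0 b : castmx E (sg Cf b *t (1%:M : 'M_(2 ^ L))) = jw_field Cf (ord0 : 'I_L.+1, b).
Proof. by rewrite /jw_field /=; case: b; rewrite /= jw_phi0 ?adjmx_cast ?adjmx_tens ?adjmx1. Qed.

Lemma cast_mul1 (A B : 'M[Cf]_2) :
  castmx E ((A *m B) *t (1%:M : 'M_(2 ^ L))) = castmx E (A *t 1%:M) *m castmx E (B *t 1%:M).
Proof. by rewrite -castmx_mulmx tensmx_mul mulmx1. Qed.

Lemma span_sgw (w : seq bool) :
  lin_comb_of (@predT' L.+1) (castmx E (foldr (fun x M => sg Cf x *m M) 1%:M w *t (1%:M : 'M_(2 ^ L)))).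
Proof.
elim: w => [|x w IH] /=; first by rewrite tens11 castmx1; exact: span1.
by rewrite cast_mul1; apply: span_mulT => //; rewrite field0; exact: span_field.
Qed.

Lemma span_delta (a b : 'I_2) :
  lin_comb_of (@predT' L.+1) (castmx E ((delta_mx a b : 'M[Cf]_2) *t (1%:M : 'M_(2 ^ L)))).
Proof. by have [w ->] := delta_sg Cf a b; exact: span_sgw. Qed.

Lemma span_Zt : lin_comb_of (@predT' L.+1) (castmx E (sigz Cf *t (1%:M : 'M_(2 ^ L)))).
Proof.
rewrite sigz_dec tensmxDl tensmxZl castmxD castmxZ tens11 castmx1.
apply: spanD; first exact: span1.
apply: spanZ; rewrite cast_mul1 !field0.
by apply: span_mulT; exact: span_field.
Qed.

Lemma one_field (x : 'I_L * bool) :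
  castmx E ((1%:M : 'M_2) *t jw_field Cf x) =
  castmx E (sigz Cf *t (1%:M : 'M_(2 ^ L))) *m jw_field Cf (lift ord0 x.1, x.2).
Proof.
case: x => i b; rewrite /jw_field /=.
case: b; rewrite jw_phiS.
  rewrite [in RHS]adjmx_cast [in RHS]adjmx_tens adjmx_sigz.
  by rewrite [X in _ *m X](castmx_irr _ E) -castmx_mulmx tensmx_mul sigz2 mul1mx.
by rewrite [X in _ *m X](castmx_irr _ E) -castmx_mulmx tensmx_mul sigz2 mul1mx.
Qed.

Lemma span_one_word (w : seq ('I_L * bool)) :
  lin_comb_of (@predT' L.+1) (castmx E ((1%:M : 'M_2) *t jw_word Cf w)).
Proof.
elim: w => [|x w IH] /=; first by rewrite tens11 castmx1; exact: span1.
have -> : (1%:M : 'M_2) *t (jw_field Cf x *m jw_word Cf w) =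
   ((1%:M : 'M_2) *t jw_field Cf x) *m ((1%:M : 'M_2) *t jw_word Cf w).
  by rewrite tensmx_mul mulmx1.
rewrite castmx_mulmx; apply: span_mulT => //.
rewrite one_field; apply: span_mulT; [exact: span_Zt | exact: span_field].
Qed.

End Step.

Lemma tens_decomp n (X : 'M[Cf]_(2 * n)) :
  X = \sum_(a < 2) \sum_(b < 2)
        delta_mx a b *t (\matrix_(j, l) X (mxtens_index (a, j)) (mxtens_index (b, l)) : 'M_n).
Proof.
apply/matrixP => i k.
case: (mxtens_indexP i) => a0 j; case: (mxtens_indexP k) => b0 l.
rewrite summxE (bigD1 a0) //= summxE (bigD1 b0) //= tensmxE !mxE !eqxx mul1r.
rewrite big1 ?addr0; last first.
  by move=> b nb; rewrite tensmxE mxE eqxx (eq_sym b0) (negbTE nb) /= mul0r.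
rewrite big1 ?addr0 // => a na; rewrite summxE big1 // => b _.
by rewrite tensmxE mxE (eq_sym a0) (negbTE na) /= mul0r.
Qed.

Lemma span_all L (M : 'M[Cf]_(2 ^ L)) : lin_comb_of (@predT' L) M.
Proof.
elim: L M => [|L IH] M.
  exists [:: (M ord0 ord0, [::])]; split => //; rewrite big_seq1 /=.
  apply/matrixP => i j.
  have Ei : i = ord0 by apply/val_inj; move: (ltn_ord i) => /=; case: (nat_of_ord i).
  have Ej : j = ord0 by apply/val_inj; move: (ltn_ord j) => /=; case: (nat_of_ord j).
  by rewrite Ei Ej !mxE /= mulr1.
pose E := (esym (expnS 2 L), esym (expnS 2 L)).
have -> : M = castmx E (castmx (expnS 2 L, expnS 2 L) M).
  by rewrite castmx_comp castmx_id.
rewrite [X in castmx E X]tens_decomp castmx_sum.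
apply: span_sum => a _; rewrite castmx_sum; apply: span_sum => b _.
set B := \matrix_(j, l) _.
have -> : delta_mx a b *t B = (delta_mx a b *t (1%:M : 'M_(2 ^ L))) *m ((1%:M : 'M_2) *t B).
  by rewrite tensmx_mul mulmx1 mul1mx.
rewrite castmx_mulmx; apply: span_mulT; first exact: span_delta.
have [s [_ ->]] := IH B.
rewrite tensr_sum castmx_sum; apply: span_sum => p _.
by rewrite tensmxZr castmxZ; apply: spanZ; exact: span_one_word.
Qed.

End Main.


Section Fin.
Variable Cf : numClosedFieldType.
Variables L K : nat.

Definition widx (x : 'I_L * bool) : 'I_(L + K) * bool := (widen_ord (leq_addr K L) x.1, x.2).

Lemma tens_id_mul (A B : 'M[Cf]_(2 ^ L)) : tens_id K (A *m B) = tens_id K A *m tens_id K B.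
Proof. by rewrite /tens_id -castmx_mulmx tensmx_mul mulmx1. Qed.

Lemma tens_id_field x : tens_id K (jw_field Cf x) = jw_field Cf (widx x).
Proof.
case: x => i b; rewrite /jw_field /=; case: b; rewrite jw_phi_widen //.
by rewrite /tens_id [in RHS]adjmx_cast [in RHS]adjmx_tens adjmx1.
Qed.

Lemma tens_id_word w : tens_id K (jw_word Cf w) = jw_word Cf (map widx w).
Proof.
elim: w => [|x w IH] /=; first by rewrite /tens_id tens11 castmx1.
by rewrite tens_id_mul IH tens_id_field.
Qed.

Lemma tens_id_sum (s : seq (Cf * seq ('I_L * bool))) :
  tens_id K (\sum_(p <- s) p.1 *: jw_word Cf p.2) =
  \sum_(p <- s) p.1 *: tens_id K (jw_word Cf p.2).
Proof.
rewrite /tens_id tensl_sum castmx_sum; apply: eq_bigr => p _.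
by rewrite tensmxZl castmxZ.
Qed.

End Fin.

Unset Implicit Arguments.
Theorem lemma3 (Cf : numClosedFieldType) (L K : nat) (U : 'M[Cf]_(2 ^ L))
    (JC : 'M[Cf]_(2 ^ (L + K))) :
  fermionic_kraus JC ->
  JC = tens_id K U ->
  lin_comb_of (word_on_first L) JC.
Proof.
move=> _ ->.
have [s [_ ->]] := span_all U.
exists [seq (p.1, map (@widx L K) p.2) | p <- s]; split.
  rewrite all_map; apply/allP => p _ /=.
  by rewrite /word_on_first all_map; apply/allP => x _ /=.
rewrite tens_id_sum big_map; apply: eq_bigr => p _.
by rewrite tens_id_word.
Qed.
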